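(* No tetrahedron $\mathcal T$ admits both a monostable weighting and a mono-unstable weighting: there do not exist $O,O'\in\operatorname{int}\mathcal T$ (equal or not) such that $(\mathcal T,O)$ is monostable and $(\mathcal T,O')$ is mono-unstable.
   Context: A weighted polyhedron is a pair $(\mathcal P,O)$ with $\mathcal P$ a convex polyhedron and $O\in\operatorname{int}\mathcal P$. $(\mathcal P,O)$ is in equilibrium on a face, edge or vertex $X$ if there exists $Q$ in the relative interior of $X$ (a vertex being its own relative interior) such that the plane perpendicular to $[O,Q]$ at $Q$ supports $\mathcal P$; equilibria on faces are stable, on vertices unstable. $(\mathcal P,O)$ is monostable if exactly one face carries an equilibrium, and mono-unstable if exactly one vertex carries an equilibrium. *)

(* Defs.v *)
From HB Require Import structures.
From mathcomp Require Import all_boot all_order all_algebra.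
From mathcomp Require Import all_classical all_reals all_analysis.
Set Implicit Arguments. Unset Strict Implicit. Unset Printing Implicit Defensive.
Import Order.TTheory GRing.Theory Num.Theory.
Import numFieldNormedType.Exports.
Local Open Scope classical_set_scope.
Local Open Scope ring_scope.

Section Tetra.
Variable R : realType.
Notation pt := 'rV[R]_3.

Definition dot (u w : pt) : R := (u *m w^T) 0 0.

Definition affinely_independent (v : 'I_4 -> pt) : Prop :=
  forall l : 'I_4 -> R, \sum_i l i = 0 -> \sum_i l i *: v i = 0 ->
    forall i, l i = 0.

Definition tetra (v : 'I_4 -> pt) : set pt :=
  [set x | exists l : 'I_4 -> R, (forall i, 0 <= l i) /\ \sum_i l i = 1 /\
           x = \sum_i l i *: v i].

(* relative interior of the face opposite to vertex k (the triangle spanned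
   by the three other vertices) *)
Definition face_relint (v : 'I_4 -> pt) (k : 'I_4) : set pt :=
  [set x | exists l : 'I_4 -> R, l k = 0 /\ (forall i, i != k -> 0 < l i) /\
           \sum_i l i = 1 /\ x = \sum_i l i *: v i].

(* the plane through Q perpendicular to [O,Q] supports P, with Q in P *)
Definition supports_at (P : set pt) (O Q : pt) : Prop :=
  P Q /\ Q != O /\
  ((forall X, P X -> dot (X - Q) (Q - O) <= 0) \/
   (forall X, P X -> dot (X - Q) (Q - O) >= 0)).

Definition equilibrium_on_face (v : 'I_4 -> pt) (O : pt) (k : 'I_4) : Prop :=
  exists Q, face_relint v k Q /\ supports_at (tetra v) O Q.

Definition equilibrium_on_vertex (v : 'I_4 -> pt) (O : pt) (j : 'I_4) : Prop :=
  supports_at (tetra v) O (v j).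

Definition monostable (v : 'I_4 -> pt) (O : pt) : Prop :=
  exists! k : 'I_4, equilibrium_on_face v O k.

Definition mono_unstable (v : 'I_4 -> pt) (O : pt) : Prop :=
  exists! j : 'I_4, equilibrium_on_vertex v O j.

End Tetra.

(* Main.v *)
Require Import Defs.
From HB Require Import structures.
From mathcomp Require Import all_boot all_order all_algebra.
From mathcomp Require Import all_classical all_reals all_analysis.
From mathcomp Require Import ring lra.
Import Order.TTheory GRing.Theory Num.Theory.
Import numFieldNormedType.Exports.
Local Open Scope classical_set_scope.
Local Open Scope ring_scope.


Section S.
Variable R : realType.
Notation pt := 'rV[R]_3.

Lemma dotE (u w : pt) : dot u w = \sum_j u 0 j * w 0 j.
Proof. by rewrite /dot !mxE; apply: eq_bigr => j _; rewrite mxE. Qed.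

Lemma dotC (u w : pt) : dot u w = dot w u.
Proof. by rewrite !dotE; apply: eq_bigr => j _; rewrite mulrC. Qed.

Lemma dotDl (u u' w : pt) : dot (u + u') w = dot u w + dot u' w.
Proof. rewrite !dotE -big_split; apply: eq_bigr => j _; by rewrite mxE mulrDl. Qed.

Lemma dotZl (a : R) (u w : pt) : dot (a *: u) w = a * dot u w.
Proof. rewrite !dotE mulr_sumr; apply: eq_bigr => j _; by rewrite mxE mulrA. Qed.

Lemma dotNl (u w : pt) : dot (- u) w = - dot u w.
Proof. by rewrite -scaleN1r dotZl mulN1r. Qed.

Lemma dotBl (u u' w : pt) : dot (u - u') w = dot u w - dot u' w.
Proof. by rewrite dotDl dotNl. Qed.

Lemma dot0l (w : pt) : dot 0 w = 0.
Proof. by rewrite -(scale0r (0:pt)) dotZl mul0r. Qed.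

Lemma dotDr (u w w' : pt) : dot u (w + w') = dot u w + dot u w'.
Proof. by rewrite dotC dotDl !(dotC u). Qed.
Lemma dotZr (a : R) (u w : pt) : dot u (a *: w) = a * dot u w.
Proof. by rewrite dotC dotZl dotC. Qed.
Lemma dotNr (u w : pt) : dot u (- w) = - dot u w.
Proof. by rewrite dotC dotNl dotC. Qed.
Lemma dotBr (u w w' : pt) : dot u (w - w') = dot u w - dot u w'.
Proof. by rewrite dotDr dotNr. Qed.
Lemma dot0r (u : pt) : dot u 0 = 0.
Proof. by rewrite dotC dot0l. Qed.

Lemma dot_suml (I : finType) (F : I -> pt) (w : pt) :
  dot (\sum_i F i) w = \sum_i dot (F i) w.
Proof.
apply: (big_ind2 (fun a b => dot a w = b)); first by rewrite dot0l.
  by move=> a b c d <- <-; rewrite dotDl.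
by [].
Qed.
Lemma dot_sumr (I : finType) (F : I -> pt) (w : pt) :
  dot w (\sum_i F i) = \sum_i dot w (F i).
Proof. by rewrite dotC dot_suml; apply: eq_bigr => i _; rewrite dotC. Qed.

Lemma dot_ge0 (u : pt) : 0 <= dot u u.
Proof. by rewrite dotE; apply: sumr_ge0 => j _; rewrite -expr2 sqr_ge0. Qed.

Lemma dot_gt0 (u : pt) : u != 0 -> 0 < dot u u.
Proof.
move=> Hu; rewrite lt0r dot_ge0 andbT; apply/negP => /eqP H.
move: Hu; rewrite dotE in H; move/eqP: H; rewrite psumr_eq0 => [/allP Hall|j _]; last by rewrite -expr2 sqr_ge0.
move/negP; apply; apply/eqP/rowP => j; rewrite mxE.
have := Hall j (mem_index_enum j); rewrite mulf_eq0 orbb => /eqP ->.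
by [].
Qed.

Lemma dot_gt0' (u z : pt) : dot u z != 0 -> 0 < dot u u.
Proof.
move=> H; apply: dot_gt0; apply/negP => /eqP Hu; move: H; by rewrite Hu dot0l eqxx.
Qed.

End S.


Section S2.
Variable R : realType.
Notation pt := 'rV[R]_3.
Variable v : 'I_4 -> pt.

Definition dl (x y : 'I_4) : R := (x == y)%:R.

Lemma dot_rows (E c : 'M[R]_3) i j : dot (row j E) (row i c^T) = (E *m c) j i.
Proof. rewrite dotE !mxE; apply: eq_bigr => k _; by rewrite !mxE. Qed.

Lemma dot_rowm (u : pt) (c : 'M[R]_3) i : dot u (row i c^T) = (u *m c) 0 i.
Proof. rewrite dotE !mxE; apply: eq_bigr => k _; by rewrite !mxE. Qed.

Lemma Kexists : affinely_independent v ->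
  exists K : 'I_4 -> pt,
    (forall x y, dot (v y - v ord0) (K x) = dl x y - dl x ord0) /\
    \sum_x K x = 0 /\
    (forall u, u = \sum_x dot u (K x) *: (v x - v ord0)).
Proof.
move=> HA.
pose E : 'M[R]_3 := \matrix_(i, j) (v (lift ord0 i) - v ord0) 0 j.
have rowE i : row i E = v (lift ord0 i) - v ord0 by apply/rowP => j; rewrite !mxE.
have HE : E \in unitmx.
  rewrite unitmxE unitfE; apply/negP => /det0P [c Hc0 HcE].
  pose l (x:'I_4) := if unlift ord0 x is Some i then c 0 i else - \sum_i c 0 i.
  have Hl (i : 'I_3) : l (lift ord0 i) = c 0 i by rewrite /l liftK.
  have Hl0 : l ord0 = - \sum_i c 0 i by rewrite /l unlift_none.
  clearbody l.
  have Hsum : \sum_x l x = 0.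
    rewrite big_ord_recl Hl0.
    under [X in _ + X]eq_bigr do rewrite Hl.
    by rewrite addNr.
  have Hv : \sum_x l x *: v x = 0.
    rewrite big_ord_recl Hl0.
    under [X in _ + X]eq_bigr do rewrite Hl.
    transitivity (c *m E); last exact HcE.
    rewrite mulmx_sum_row.
    under [in RHS]eq_bigr do rewrite rowE scalerBr.
    by rewrite sumrB scaleNr scaler_suml addrC.
  move/negP: Hc0; apply; apply/eqP/rowP => i; rewrite mxE.
  by have := HA l Hsum Hv (lift ord0 i); rewrite Hl.
pose c := invmx E.
pose K (x:'I_4) : pt := if unlift ord0 x is Some i then row i c^T else - \sum_i row i c^T.
have HK (i : 'I_3) : K (lift ord0 i) = row i c^T by rewrite /K liftK.
have HK0 : K ord0 = - \sum_i row i c^T by rewrite /K unlift_none.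
clearbody K.
have HEc : E *m c = 1 by rewrite mulmxV.
have HcE : c *m E = 1 by rewrite mulVmx.
exists K; split; [|split].
- move=> x y.
  case: (unliftP ord0 y) => [j ->|->]; last by rewrite subrr dot0l subrr.
  rewrite -rowE.
  case: (unliftP ord0 x) => [i ->|->].
    rewrite HK dot_rows HEc mxE /dl (inj_eq (@lift_inj _ ord0)).
    have /negPf -> : lift ord0 i != ord0 by rewrite eq_sym neq_lift.
    by rewrite subr0 eq_sym.
  rewrite HK0 dotNr dot_sumr.
  under eq_bigr do rewrite dot_rows HEc mxE.
  rewrite /dl eqxx (negPf (neq_lift ord0 j)) sub0r; congr (- _).
  rewrite (bigD1 j) //= eqxx big1 ?addr0 // => i /negPf; by rewrite eq_sym => ->.
- rewrite big_ord_recl HK0.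
  under [X in _ + X]eq_bigr do rewrite HK.
  by rewrite addNr.
- move=> u; rewrite big_ord_recl subrr scaler0 add0r.
  under eq_bigr do rewrite HK -rowE dot_rowm.
  by rewrite -mulmx_sum_row -mulmxA HcE mulmx1.
Qed.
End S2.


Ltac o4 := let m := fresh "m" in let H := fresh "H" in case=> [[|[|[|[|m]]]] H] //.
Ltac ord4 x := let m := fresh "m" in let H := fresh "H" in case: x => [[|[|[|[|m]]]] H] //.

Lemma I4_cover (a b c d x : 'I_4) :
  a != b -> a != c -> a != d -> b != c -> b != d -> c != d -> [|| x == a, x == b, x == c | x == d].
Proof. ord4 a; ord4 b; ord4 c; ord4 d; ord4 x. Qed.

Lemma I4_other (x : 'I_4) : exists y : 'I_4, y != x.
Proof. ord4 x; [exists (inord 1)|exists (inord 0)|exists (inord 0)|exists (inord 0)]; by rewrite -val_eqE /= inordK. Qed.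

Definition o0 : 'I_4 := @Ordinal 4 0 isT.
Definition o1 : 'I_4 := @Ordinal 4 1 isT.
Definition o2 : 'I_4 := @Ordinal 4 2 isT.
Definition o3 : 'I_4 := @Ordinal 4 3 isT.

Lemma I4_other3 (x y z : 'I_4) : exists w : 'I_4, [&& w != x, w != y & w != z].
Proof.
have : [|| [&& o0 != x, o0 != y & o0 != z], [&& o1 != x, o1 != y & o1 != z],
           [&& o2 != x, o2 != y & o2 != z] | [&& o3 != x, o3 != y & o3 != z]].
  by ord4 x; ord4 y; ord4 z.
by case/or4P => H; eexists; exact H.
Qed.

Lemma I4_compl (k : 'I_4) : exists a b c : 'I_4,
  [&& k != a, k != b, k != c, a != b, a != c & b != c].
Proof.
ord4 k.
- by exists o1, o2, o3.
- by exists o0, o2, o3.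
- by exists o0, o1, o3.
- by exists o0, o1, o2.
Qed.

Lemma sum4 (V : zmodType) (F : 'I_4 -> V) (a b c d : 'I_4) :
  a != b -> a != c -> a != d -> b != c -> b != d -> c != d ->
  \sum_i F i = F a + F b + F c + F d.
Proof.
move=> ab ac ad bc bd cd.
rewrite (bigD1 a) //= (bigD1 b) /=; last by rewrite eq_sym.
rewrite (bigD1 c) /=; last by rewrite eq_sym ac eq_sym bc.
rewrite (bigD1 d) /=; last by rewrite eq_sym ad eq_sym bd eq_sym cd.
rewrite big1 ?addr0 ?addrA // => i /andP[/andP[/andP[ia ib] ic] id].
by have := @I4_cover a b c d i ab ac ad bc bd cd; rewrite (negPf ia) (negPf ib) (negPf ic) (negPf id).
Qed.


Arguments dl {R}.
Lemma P4real (R : realFieldType) (yy zz ww yz yw zw : R) : 0 < yy -> 0 < zz -> 0 < ww ->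
  yz^+2 <= yy*zz -> yw^+2 <= yy*ww -> zw^+2 <= zz*ww -> 0 < zw ->
  0 < -(yw+zw+ww) -> 0 < -(yy+yz+yw) ->
  [/\ ww*yz - yw*zw <= 0, zz*yw - yz*zw <= 0 & yy*zw - yz*yw <= 0].
Proof.
move=> Hy Hz Hw c1 c2 c3 Hzw Hxw Hxy.
have Hyw : yw < 0 by lra.
split.
- have e : ww*yz - yw*zw = -(ww*(-(yy+yz+yw)) - (-(yw+zw+ww))*yw) - (yy*ww - yw^+2) by ring.
  rewrite e; nra.
- case: (lerP (-(yz+zz+zw)) 0) => Hxz.
  + have e : zz*yw - yz*zw = -(zz*(-(yw+zw+ww)) - (-(yz+zz+zw))*zw) - (ww*zz - zw^+2) by ring.
    rewrite e; nra.
  + have Hyz : yz < 0 by lra.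
    have e : zz*yw - yz*zw = -(zz*(-(yy+yz+yw)) - (-(yz+zz+zw))*yz) - (yy*zz - yz^+2) by ring.
    rewrite e; nra.
- have e : yy*zw - yz*yw = -(yy*(-(yw+zw+ww)) - (-(yy+yz+yw))*yw) - (ww*yy - yw^+2) by ring.
  rewrite e; nra.
Qed.

Ltac dst := solve [done | rewrite eq_sym; done].
Section Geo.
Variable R : realType.
Notation pt := 'rV[R]_3.
Variable v : 'I_4 -> pt.
Variable K : 'I_4 -> pt.
Hypothesis HK1 : forall x y, dot (v y - v ord0) (K x) = dl x y - dl x ord0.
Hypothesis HK2 : \sum_x K x = 0.
Hypothesis HK3 : forall u, u = \sum_x dot u (K x) *: (v x - v ord0).

Lemma Ldiff i z x : dot (v i - v z) (K x) = dl x i - dl x z.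
Proof.
rewrite (_ : v i - v z = (v i - v ord0) - (v z - v ord0)); last by rewrite opprB addrA subrK.
by rewrite dotBl !HK1 opprB addrA subrK.
Qed.

Lemma sum_dl (mu : 'I_4 -> R) x : \sum_i mu i * dl x i = mu x.
Proof.
rewrite (bigD1 x) //= /dl eqxx mulr1 big1 ?addr0 // => i Hi.
by rewrite eq_sym (negPf Hi) mulr0.
Qed.

Lemma sum_dlv (F : 'I_4 -> pt) x : \sum_i dl x i *: F i = F x.
Proof.
rewrite (bigD1 x) //= /dl eqxx scale1r big1 ?addr0 // => i Hi.
by rewrite eq_sym (negPf Hi) scale0r.
Qed.

Lemma sum_dl1 x : \sum_i (dl x i : R) = 1.
Proof. by have := sum_dl (fun _ => 1) x; under eq_bigr do rewrite mul1r. Qed.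

Lemma diff_expand (mu : 'I_4 -> R) (w : pt) : \sum_i mu i = 1 ->
  \sum_i mu i *: v i - w = \sum_i mu i *: (v i - w).
Proof.
move=> Hmu; under [RHS]eq_bigr do rewrite scalerBr.
by rewrite sumrB -scaler_suml Hmu scale1r.
Qed.

Lemma Lbary (mu : 'I_4 -> R) z x : \sum_i mu i = 1 ->
  dot (\sum_i mu i *: v i - v z) (K x) = mu x - dl x z.
Proof.
move=> Hmu; rewrite diff_expand // dot_suml.
under eq_bigr do rewrite dotZl Ldiff mulrBr.
by rewrite sumrB sum_dl -mulr_suml Hmu mul1r.
Qed.

Lemma Lrecon z u : u = \sum_x dot u (K x) *: (v x - v z).
Proof.
have E x : v x - v z = (v x - v ord0) - (v z - v ord0) by rewrite opprB addrA subrK.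
under eq_bigr do rewrite E scalerBr.
rewrite sumrB -HK3 -scaler_suml -dot_sumr HK2 dot0r scale0r subr0 //.
Qed.

Definition g x y := dot (K x) (K y).

Lemma gC x y : g x y = g y x.
Proof. exact: dotC. Qed.

Lemma gsum x : \sum_y g x y = 0.
Proof. by rewrite /g -dot_sumr HK2 dot0r. Qed.

Lemma Kexp x : K x = \sum_y g x y *: v y.
Proof.
rewrite {1}(HK3 (K x)).
under eq_bigr do rewrite scalerBr.
by rewrite sumrB -scaler_suml gsum scale0r subr0.
Qed.

Lemma gxx_pos x : 0 < g x x.
Proof.
have [y Hy] := I4_other x.
apply: (@dot_gt0' _ _ (v y - v x)); rewrite dotC Ldiff /dl eqxx (eq_sym x y) (negPf Hy).
by rewrite sub0r oppr_eq0 oner_eq0.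
Qed.

Lemma CS x y : x != y -> g x y ^+ 2 < g x x * g y y.
Proof.
move=> Hxy.
have [z /and3P [Hzx Hzy _]] := I4_other3 x y y.
pose w := g y y *: K x - g x y *: K y.
have Hw : 0 < dot w w.
  apply: (@dot_gt0' _ _ (v z - v x)); rewrite dotC /w dotBr !dotZr !Ldiff /dl.
  rewrite eqxx (eq_sym x z) (negPf Hzx) (eq_sym y z) (negPf Hzy) (eq_sym y x) (negPf Hxy).
  rewrite !subrr mulr0 subr0 sub0r mulrN1 oppr_eq0; exact/lt0r_neq0/gxx_pos.
move: Hw; rewrite /w !dotBl !dotBr !dotZl !dotZr -!/(g _ _) (gC y x).
have := gxx_pos y; have := gxx_pos x; nra.
Qed.

Lemma fall (lam : 'I_4 -> R) (o : pt) x :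
  (forall i, 0 < lam i) -> \sum_i lam i = 1 -> o = \sum_i lam i *: v i ->
  ~ equilibrium_on_face v o x -> exists y, y != x /\ lam y * g x x <= lam x * g x y.
Proof.
move=> Hl Hs Ho Hne.
case: (pselect (exists y, y != x /\ lam y * g x x <= lam x * g x y)) => // Hno.
exfalso; apply: Hne.
have Hy : forall y, y != x -> lam x * g x y < lam y * g x x.
  move=> y Hyx; rewrite ltNge; apply/negP => H; apply: Hno; by exists y.
have gxx := gxx_pos x.
set t := lam x / g x x.
have ht : 0 < t by rewrite divr_gt0.
pose mu y := lam y - t * g x y.
pose Q := \sum_y mu y *: v y.
have HQ : Q = o - t *: K x.
  rewrite /Q Ho (Kexp x) scaler_sumr -sumrB; apply: eq_bigr => y _.
  by rewrite /mu scalerBl scalerA.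
have Hmus : \sum_y mu y = 1 by rewrite /mu sumrB Hs -mulr_sumr gsum mulr0 subr0.
have Hmux : mu x = 0 by rewrite /mu /t divfK ?subrr // lt0r_neq0.
have Hmup : forall y, y != x -> 0 < mu y.
  move=> y Hyx; rewrite /mu subr_gt0 /t mulrAC ltr_pdivrMr //; exact: Hy.
exists Q; split.
  by exists mu; split; [by []| split; [exact Hmup| split; [exact Hmus| by []]]].
split.
  exists mu; split; last by split.
  by move=> y; case: (eqVneq y x) => [->|/Hmup/ltW //]; rewrite Hmux.
split.
  rewrite HQ; apply/negP => /eqP H.
  have : t *: K x = 0.
    have -> : t *: K x = o - (o - t *: K x) by rewrite opprB addrC subrK.
    by rewrite H subrr.
  move/(congr1 (fun w => dot w (K x))); rewrite dotZl dot0l -/(g x x) => /eqP.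
  by rewrite mulf_eq0 (negPf (lt0r_neq0 ht)) (negPf (lt0r_neq0 gxx)).
left => X [nu [Hnu [Hnus ->]]].
have E1 : dot (\sum_i nu i *: v i - Q) (K x) = nu x.
  rewrite (_ : \sum_i nu i *: v i - Q = (\sum_i nu i *: v i - v x) - (Q - v x)); last by rewrite opprB addrA subrK.
  by rewrite dotBl Lbary // /Q Lbary // Hmux /dl eqxx sub0r opprK subrK.
rewrite HQ (_ : o - t *: K x - o = - (t *: K x)); last by rewrite addrAC subrr add0r.
rewrite -HQ dotNr dotZr E1 oppr_le0 mulr_ge0 // ltW //.
Qed.

Lemma vert (lam : 'I_4 -> R) (o : pt) i :
  (forall i, 0 < lam i) -> \sum_i lam i = 1 -> o = \sum_i lam i *: v i ->
  ~ equilibrium_on_vertex v o i -> exists m l, dot (v m - v i) (v l - v i) < 0.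
Proof.
move=> Hl Hs Ho Hne.
case: (pselect (exists m l, dot (v m - v i) (v l - v i) < 0)) => // Hno.
exfalso; apply: Hne.
have Hge : forall m l, 0 <= dot (v m - v i) (v l - v i).
  move=> m l; rewrite leNgt; apply/negP => H; apply: Hno; by exists m, l.
split.
  exists (dl i); split; first by move=> y; rewrite /dl ler0n.
  by split; [exact: sum_dl1| rewrite sum_dlv].
split.
  apply/negP => /eqP Hvi; have [z Hz] := I4_other i.
  have := Lbary lam i z Hs; rewrite -Ho -Hvi subrr dot0l /dl (negPf Hz) subr0 => H0.
  by have := Hl z; rewrite -H0 ltxx.
left => X [nu [Hnu [Hnus ->]]].
rewrite diff_expand // Ho (_ : v i - \sum_j lam j *: v j = - (\sum_j lam j *: v j - v i)); last by rewrite opprB.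
rewrite diff_expand // dotNr oppr_le0 dot_suml; apply: sumr_ge0 => m _.
rewrite dotZl dot_sumr; apply: mulr_ge0 => //; apply: sumr_ge0 => l _.
by rewrite dotZr mulr_ge0 // ltW.
Qed.

Lemma bridge i m l n : i != m -> i != l -> i != n -> m != l -> m != n -> l != n ->
  dot (v m - v i) (v l - v i) < 0 -> 0 < g n n * g m l - g m n * g l n.
Proof.
move=> im il iN ml mn ln Hneg.
set p := v m - v i; set q := v l - v i.
set A := g n n *: K m - g m n *: K n.
have HAn : dot A (K n) = 0 by rewrite /A dotBl !dotZl -!/(g _ _) mulrC subrr.
have HA : A = dot A (K m) *: p + dot A (K l) *: q.
  rewrite {1}(Lrecon i A) (@sum4 _ _ i m l n im il iN ml mn ln) subrr scaler0 add0r HAn scale0r addr0.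
  by [].
have HAq : dot q A = 0.
  rewrite /A dotBr !dotZr /q !Ldiff /dl (negPf ml) (eq_sym m i) (negPf im).
  by rewrite (eq_sym n l) (negPf ln) (eq_sym n i) (negPf iN) !subrr !mulr0 subrr.
have Hq : 0 < dot q q.
  apply: (@dot_gt0' _ _ (K l)); rewrite /q Ldiff /dl eqxx (eq_sym l i) (negPf il) subr0.
  exact: oner_neq0.
have Ha1 : dot A (K m) = g n n * g m m - g m n * g m n.
  by rewrite /A dotBl !dotZl -!/(g _ _) (gC n m).
have Ha2 : dot A (K l) = g n n * g m l - g m n * g l n.
  by rewrite /A dotBl !dotZl -!/(g _ _) (gC n l).
have Hcs := CS m n mn.
move: HAq; rewrite {1}HA dotDr !dotZr (dotC _ q p) Ha1 Ha2.
have := gxx_pos n; nra.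
Qed.

Lemma star s a b c : s != a -> s != b -> s != c -> a != b -> a != c -> b != c ->
  0 < g s a -> 0 < g s b -> 0 < g s c -> False.
Proof.
move=> sa sb sc ab ac bc H1 H2 H3.
have := gsum s; rewrite (@sum4 _ _ s a b c sa sb sc ab ac bc).
have := gxx_pos s; lra.
Qed.

Lemma P4idx u1 u2 u3 u4 : u1 != u2 -> u1 != u3 -> u1 != u4 -> u2 != u3 -> u2 != u4 -> u3 != u4 ->
  0 < g u1 u2 -> 0 < g u2 u3 -> 0 < g u3 u4 ->
  forall m l n, m != u3 -> l != u3 -> n != u3 -> m != l -> m != n -> l != n ->
  g n n * g m l - g m n * g l n <= 0.
Proof.
move=> d12 d13 d14 d23 d24 d34 H12 H23 H34 m l n Hm Hl Hn Hml Hmn Hln.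
have s2 := gsum u2; rewrite (@sum4 _ _ u1 u2 u3 u4 d12 d13 d14 d23 d24 d34) in s2.
have s4 := gsum u4; rewrite (@sum4 _ _ u1 u2 u3 u4 d12 d13 d14 d23 d24 d34) in s4.
rewrite (gC u2 u1) (gC u2 u4) in s2.
rewrite (gC u4 u3) in s4.
have c1 := CS u4 u1 (contra_neq (fun e => esym e) d14) .
have c2 := CS u4 u2 (contra_neq (fun e => esym e) d24).
have c3 := CS u1 u2 d12.
have [G1 G2 G3] := @P4real R (g u4 u4) (g u1 u1) (g u2 u2) (g u4 u1) (g u4 u2) (g u1 u2)
  (gxx_pos u4) (gxx_pos u1) (gxx_pos u2) (ltW c1) (ltW c2) (ltW c3) H12 ltac:(lra) ltac:(lra).
have cov x : x != u3 -> [|| x == u1, x == u2 | x == u4].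
  by move=> Hx; have := @I4_cover u1 u2 u3 u4 x d12 d13 d14 d23 d24 d34; rewrite (negPf Hx).
case/or3P: (cov m Hm) => /eqP ?; subst m;
case/or3P: (cov l Hl) => /eqP ?; subst l;
case/or3P: (cov n Hn) => /eqP ?; subst n;
  try (rewrite eqxx in Hml; discriminate);
  try (rewrite eqxx in Hmn; discriminate);
  try (rewrite eqxx in Hln; discriminate);
  rewrite ?[g u1 u4]gC ?[g u2 u4]gC ?[g u2 u1]gC; lra.
Qed.

Lemma interior_bary (o : pt) : interior (tetra v) o ->
  exists lam : 'I_4 -> R, (forall i, 0 < lam i) /\ \sum_i lam i = 1 /\ o = \sum_i lam i *: v i.
Proof.
move=> Ho.
have [mu [Hmu [Hmus Hmuo]]] : tetra v o := interior_subset Ho.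
exists mu; split => //.
move=> x; rewrite lt0r Hmu andbT; apply/negP => /eqP Hx0.
move: Ho; rewrite /interior => /nbhs_ballP [e e0 He].
pose M := \sum_j `|o 0 j - v x 0 j|.
have M0 : 0 <= M by apply: sumr_ge0.
pose eps := e / (M + 1).
have eps0 : 0 < eps by rewrite divr_gt0 //; lra.
have epsM : eps * M < e.
  rewrite /eps mulrAC ltr_pdivrMr; last lra.
  have e0' : 0 < e := e0; rewrite mulrDr mulr1; lra.
pose y := o + eps *: (o - v x).
have : tetra v y.
  apply: He; rewrite /ball /=; split => // i j.
  rewrite /ball /= (_ : o i j - y i j = - (eps * (o 0 j - v x 0 j))); last first.
    by rewrite /y !mxE (ord1 i); ring.
  rewrite normrN normrM gtr0_norm //.
  apply: (le_lt_trans _ epsM); apply: ler_wpM2l; first exact: ltW.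
  by rewrite /M (bigD1 j) //= lerDl sumr_ge0.
move=> [nu [Hnu [Hnus Hy]]].
have H1 := Lbary nu x x Hnus; rewrite -Hy in H1.
have H2 := Lbary mu x x Hmus; rewrite -Hmuo Hx0 in H2.
have Hyx : y - v x = (1 + eps) *: (o - v x).
  by rewrite /y scalerDl scale1r addrAC.
rewrite Hyx dotZl H2 /dl eqxx in H1.
have := Hnu x; move: H1; rewrite /= mulr1n; lra.
Qed.

Lemma main_contra : ~ (exists o o' : pt, interior (tetra v) o /\ interior (tetra v) o' /\
       monostable v o /\ mono_unstable v o').
Proof.
move=> [ob [ob' [Io [Io' [Hms Hmu]]]]].
have [lam [Hl [Hs Ho]]] := interior_bary ob Io.
have [lam' [Hl' [Hs' Ho']]] := interior_bary ob' Io'.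
case: Hms => k [_ Hk].
case: Hmu => j [_ Hj].
have Hobt : forall i, i != j -> exists m l, dot (v m - v i) (v l - v i) < 0.
  move=> i Hij; apply: (@vert lam' ob' i Hl' Hs' Ho') => Heq.
  by move: Hij; rewrite (Hj i Heq) eqxx.
have key : forall a, a != j ->
   (forall m l n, m != a -> l != a -> n != a -> m != l -> m != n -> l != n ->
      g n n * g m l - g m n * g l n <= 0) -> False.
  move=> a Haj Hle; have [m [l Hml]] := Hobt a Haj.
  have ma : m != a.
    by apply/negP => /eqP E; move: Hml; rewrite E subrr dot0l ltxx.
  have la : l != a.
    by apply/negP => /eqP E; move: Hml; rewrite E subrr dot0r ltxx.
  have mlne : m != l.
    by apply/negP => /eqP E; move: Hml; rewrite E ltNge dot_ge0.
  have [n /and3P[na nm nl]] := I4_other3 a m l.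
  have := @bridge a m l n (contra_neq (fun e => esym e) ma) (contra_neq (fun e => esym e) la)
     (contra_neq (fun e => esym e) na) mlne (contra_neq (fun e => esym e) nm)
     (contra_neq (fun e => esym e) nl) Hml.
  have := Hle m l n ma la na mlne (contra_neq (fun e => esym e) nm) (contra_neq (fun e => esym e) nl).
  lra.
have pathF : forall u1 u2 u3 u4, u1 != u2 -> u1 != u3 -> u1 != u4 -> u2 != u3 -> u2 != u4 -> u3 != u4 ->
    0 < g u1 u2 -> 0 < g u2 u3 -> 0 < g u3 u4 -> False.
  move=> u1 u2 u3 u4 d12 d13 d14 d23 d24 d34 H12 H23 H34.
  case: (eqVneq u3 j) => [E3|N3]; last first.
    by apply: (key u3 N3); apply: (@P4idx u1 u2 u3 u4 d12 d13 d14 d23 d24 d34 H12 H23 H34).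
  have N2 : u2 != j by rewrite -E3.
  refine (key u2 N2 _).
  refine (@P4idx u4 u3 u2 u1 _ _ _ _ _ _ _ _ _); try by rewrite gC.
  all: try by rewrite eq_sym.
have Hfall : forall x, x != k -> exists y, y != x /\ 0 < g x y /\
    lam y ^+ 2 / g y y < lam x ^+ 2 / g x x.
  move=> x Hxk.
  have [y [Hyx Hle]] := @fall lam ob x Hl Hs Ho (fun Heq => elimT negP Hxk (introT eqP (esym (Hk x Heq)))).
  exists y; split => //.
  have gxx := gxx_pos x; have gyy := gxx_pos y; have ly := Hl y; have lx := Hl x.
  have gxy : 0 < g x y by nra.
  split => //.
  have cs := CS x y (contra_neq (fun e => esym e) Hyx).
  rewrite ltr_pdivrMr // mulrAC ltr_pdivlMr //.
  have h1 : (lam y * g x x) ^+ 2 <= (lam x * g x y) ^+ 2.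
    by rewrite ler_pXn2r // ?nnegrE ?mulr_ge0 // ltW // mulr_gt0.
  have h2 : lam x ^+ 2 * g x y ^+ 2 < lam x ^+ 2 * (g x x * g y y).
    by rewrite ltr_pM2l // exprn_gt0.
  rewrite -(ltr_pM2r gxx).
  move: h1 h2; rewrite !exprMn; nra.
have [a [b [c H6]]] := I4_compl k.
case/and5P: H6 => ka kb kc ab /andP[ac bc].
have ak : a != k by rewrite eq_sym.
have bk : b != k by rewrite eq_sym.
have ck : c != k by rewrite eq_sym.
have [ya [Hya [Pa Ha]]] := Hfall a ak.
have [yb [Hyb [Pb Hb]]] := Hfall b bk.
have [yc [Hyc [Pc Hc]]] := Hfall c ck.
have Pa' : 0 < g ya a by rewrite gC.
have Pb' : 0 < g yb b by rewrite gC.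
have Pc' : 0 < g yc c by rewrite gC.
have cov y := @I4_cover k a b c y ka kb kc ab ac bc.
case/or4P: (cov ya) => /eqP ?; subst ya;
case/or4P: (cov yb) => /eqP ?; subst yb;
case/or4P: (cov yc) => /eqP ?; subst yc;
  try match goal with H : is_true (?x != ?x) |- _ => by rewrite eqxx in H end;
  first [ lra
        | match goal with H1 : is_true (0 < g ?s ?p), H2 : is_true (0 < g ?s ?q),
                          H3 : is_true (0 < g ?s ?r) |- _ =>
            exact (star s p q r ltac:(dst) ltac:(dst) ltac:(dst) ltac:(dst) ltac:(dst) ltac:(dst) H1 H2 H3) end
        | match goal with H1 : is_true (0 < g ?u1 ?u2), H2 : is_true (0 < g ?u2 ?u3),
                          H3 : is_true (0 < g ?u3 ?u4) |- _ =>
            exact (pathF u1 u2 u3 u4 ltac:(dst) ltac:(dst) ltac:(dst) ltac:(dst) ltac:(dst) ltac:(dst) H1 H2 H3) end ].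
Qed.

End Geo.


Theorem theorem1p7 (R : realType) (v : 'I_4 -> 'rV[R]_3) :
  affinely_independent v ->
  ~ (exists O O' : 'rV[R]_3,
       (interior (tetra v)) O /\ (interior (tetra v)) O' /\
       monostable v O /\ mono_unstable v O').
Proof.
move=> HA; have [K [HK1 [HK2 HK3]]] := @Kexists R v HA.
exact: (@main_contra R v K HK1 HK2 HK3).
Qed.
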